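(* Let $w:=3/\sqrt{2}$ and define, for $q\in(0,1)$ and $t\in[0,w]$, $$\theta_5(q,t):=\sum_{j=0}^{5}q^{j(j+1)/2}(-t+wi)^j,\qquad \theta_*(q,t):=\sum_{j=6}^{\infty}q^{j(j+1)/2}(-t+wi)^j.$$ Then for all $(q,t)\in[0.3,0.6]\times[0,w]$ one has $|\theta_*(q,t)|\leq 0.018$ and $\mathrm{Im}(\theta_5(q,t))>0.13$. Consequently, for $(q,t)\in[0.3,0.6]\times[0,w]$, $\theta(q,-t+wi)\neq 0$, where $\theta(q,x):=\sum_{j=0}^{\infty}q^{j(j+1)/2}x^j$. *)

(* Defs.v *)
From Stdlib Require Import Reals.
From Coquelicot Require Import Coquelicot.
Open Scope R_scope.

Definition w : R := 3 / sqrt 2.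

Definition xpt (t : R) : C := (- t, w)%R.

Definition theta_term (q : R) (x : C) (j : nat) : C :=
  Cmult (RtoC (q ^ (j * (j + 1) / 2))) (Cpow x j).

Definition theta5 (q t : R) : C :=
  Cplus (theta_term q (xpt t) 0)
 (Cplus (theta_term q (xpt t) 1)
 (Cplus (theta_term q (xpt t) 2)
 (Cplus (theta_term q (xpt t) 3)
 (Cplus (theta_term q (xpt t) 4)
        (theta_term q (xpt t) 5))))).

Definition theta_star_term (q t : R) (j : nat) : C :=
  if (j <? 6)%nat then RtoC 0 else theta_term q (xpt t) j.

(* Main.v *)
Require Import Defs.
From Stdlib Require Import Reals Lra Lia.
From Coquelicot Require Import Coquelicot.
Open Scope R_scope.

Definition PW q t W := q - 2*t*q^3 + q^6*(3*t^2 - W^2) + q^10*(4*t*W^2-4*t^3) + q^15*(5*t^4-10*t^2*W^2+W^4).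

Lemma Im5 q t : Im (theta5 q t) = w * PW q t w.
Proof. unfold theta5, theta_term, xpt, PW. simpl. ring. Qed.

Definition WL := 21213/10000.
Definition WH := 21214/10000.

Lemma w_facts : w^2 = 9/2 /\ WL < w <= WH.
Proof.
  assert (Hs : sqrt 2 * sqrt 2 = 2) by (apply sqrt_sqrt; lra).
  assert (Hp : 0 < sqrt 2) by (apply sqrt_lt_R0; lra).
  assert (H2 : w^2 = 9/2).
  { unfold w. field_simplify; [|lra]. replace (sqrt 2 ^2) with 2 by (simpl; lra). lra. }
  assert (Hw : 0 < w) by (unfold w; apply Rdiv_lt_0_compat; lra).
  unfold WL, WH. split; [exact H2|]. split; nra.
Qed.

Lemma mono3 x y z x' y' z' a b c : 0 <= x <= x' -> 0 <= y <= y' -> 0 <= z <= z' ->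
  x^a*y^b*z^c <= x'^a*y'^b*z'^c.
Proof.
  intros Hx Hy Hz.
  assert (0 <= x^a) by (apply pow_le; lra).
  assert (0 <= y^b) by (apply pow_le; lra).
  assert (0 <= z^c) by (apply pow_le; lra).
  assert (x^a <= x'^a) by (apply pow_incr; lra).
  assert (y^b <= y'^b) by (apply pow_incr; lra).
  assert (z^c <= z'^c) by (apply pow_incr; lra).
  apply Rmult_le_compat; try apply Rmult_le_compat; try apply Rmult_le_pos; lra.
Qed.
Definition Ep q t W := (2/1)*(q^3*t^0*W^0) + (-3/1)*(q^6*t^1*W^0) + (-3/1)*(q^6*t^0*W^1) + (45/2)*(q^15*t^1*W^0) + (45/2)*(q^15*t^0*W^1) + (4/1)*(q^10*t^2*W^0) + (4/1)*(q^10*t^1*W^1) + (-5/1)*(q^15*t^3*W^0) + (-5/1)*(q^15*t^2*W^1).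

Definition Eplb ql qh tl th := (2/1)*(ql^3*tl^0*WL^0) + (-3/1)*(qh^6*th^1*WH^0) + (-3/1)*(qh^6*th^0*WH^1) + (45/2)*(ql^15*tl^1*WL^0) + (45/2)*(ql^15*tl^0*WL^1) + (4/1)*(ql^10*tl^2*WL^0) + (4/1)*(ql^10*tl^1*WL^1) + (-5/1)*(qh^15*th^3*WH^0) + (-5/1)*(qh^15*th^2*WH^1).

Lemma Epleaf c ql qh tl th q t W : c <= Eplb ql qh tl th -> 0 <= ql -> ql <= q <= qh -> 0 <= tl -> tl <= t <= th -> WL <= W <= WH -> c <= Ep q t W.
Proof.
  intros H0 H1 H2 H3 H4 H5. assert (0 <= WL) by (unfold WL; lra). unfold Ep, Eplb in *.
  pose proof (mono3 ql tl WL q t W 3 0 0 ltac:(lra) ltac:(lra) ltac:(lra)).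
  pose proof (mono3 q t W qh th WH 6 1 0 ltac:(lra) ltac:(lra) ltac:(lra)).
  pose proof (mono3 q t W qh th WH 6 0 1 ltac:(lra) ltac:(lra) ltac:(lra)).
  pose proof (mono3 ql tl WL q t W 15 1 0 ltac:(lra) ltac:(lra) ltac:(lra)).
  pose proof (mono3 ql tl WL q t W 15 0 1 ltac:(lra) ltac:(lra) ltac:(lra)).
  pose proof (mono3 ql tl WL q t W 10 2 0 ltac:(lra) ltac:(lra) ltac:(lra)).
  pose proof (mono3 ql tl WL q t W 10 1 1 ltac:(lra) ltac:(lra) ltac:(lra)).
  pose proof (mono3 q t W qh th WH 15 3 0 ltac:(lra) ltac:(lra) ltac:(lra)).
  pose proof (mono3 q t W qh th WH 15 2 1 ltac:(lra) ltac:(lra) ltac:(lra)).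
  lra.
Qed.

Definition Fp q t W := (1/1)*(q^1*t^0*W^0) + (-2/1)*(q^3*t^0*W^1) + (9/1)*(q^6*t^0*W^0) + (-81/1)*(q^15*t^0*W^0).

Definition Fplb ql qh tl th := (1/1)*(ql^1*tl^0*WL^0) + (-2/1)*(qh^3*th^0*WH^1) + (9/1)*(ql^6*tl^0*WL^0) + (-81/1)*(qh^15*th^0*WH^0).

Lemma Fpleaf c ql qh tl th q t W : c <= Fplb ql qh tl th -> 0 <= ql -> ql <= q <= qh -> 0 <= tl -> tl <= t <= th -> WL <= W <= WH -> c <= Fp q t W.
Proof.
  intros H0 H1 H2 H3 H4 H5. assert (0 <= WL) by (unfold WL; lra). unfold Fp, Fplb in *.
  pose proof (mono3 ql tl WL q t W 1 0 0 ltac:(lra) ltac:(lra) ltac:(lra)).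
  pose proof (mono3 q t W qh th WH 3 0 1 ltac:(lra) ltac:(lra) ltac:(lra)).
  pose proof (mono3 ql tl WL q t W 6 0 0 ltac:(lra) ltac:(lra) ltac:(lra)).
  pose proof (mono3 q t W qh th WH 15 0 0 ltac:(lra) ltac:(lra) ltac:(lra)).
  lra.
Qed.

Lemma Epos q t W : 3/10 <= q <= 6/10 -> 0 <= t <= WH -> WL <= W <= WH -> 0 <= Ep q t W.
Proof.
  intros Hq Ht HW. unfold WL, WH in *.
  destruct (Rle_lt_dec q (9/20)).
  {
    destruct (Rle_lt_dec q (3/8)).
    {
      apply (Epleaf 0 (3/10) (3/8) 0 (10607/5000)); unfold Eplb, WL, WH; lra. }
    {
      destruct (Rle_lt_dec q (33/80)).
      {
        apply (Epleaf 0 (3/8) (33/80) 0 (10607/5000)); unfold Eplb, WL, WH; lra. }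
      {
        apply (Epleaf 0 (33/80) (9/20) 0 (10607/5000)); unfold Eplb, WL, WH; lra. } } }
  {
    destruct (Rle_lt_dec q (21/40)).
    {
      destruct (Rle_lt_dec q (39/80)).
      {
        apply (Epleaf 0 (9/20) (39/80) 0 (10607/5000)); unfold Eplb, WL, WH; lra. }
      {
        destruct (Rle_lt_dec t (10607/10000)).
        {
          apply (Epleaf 0 (39/80) (21/40) 0 (10607/10000)); unfold Eplb, WL, WH; lra. }
        {
          destruct (Rle_lt_dec q (81/160)).
          {
            apply (Epleaf 0 (39/80) (81/160) (10607/10000) (10607/5000)); unfold Eplb, WL, WH; lra. }
          {
            apply (Epleaf 0 (81/160) (21/40) (10607/10000) (10607/5000)); unfold Eplb, WL, WH; lra. } } } }
    {
      destruct (Rle_lt_dec q (9/16)).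
      {
        destruct (Rle_lt_dec t (10607/10000)).
        {
          destruct (Rle_lt_dec q (87/160)).
          {
            apply (Epleaf 0 (21/40) (87/160) 0 (10607/10000)); unfold Eplb, WL, WH; lra. }
          {
            apply (Epleaf 0 (87/160) (9/16) 0 (10607/10000)); unfold Eplb, WL, WH; lra. } }
        {
          destruct (Rle_lt_dec q (87/160)).
          {
            destruct (Rle_lt_dec t (31821/20000)).
            {
              apply (Epleaf 0 (21/40) (87/160) (10607/10000) (31821/20000)); unfold Eplb, WL, WH; lra. }
            {
              destruct (Rle_lt_dec q (171/320)).
              {
                apply (Epleaf 0 (21/40) (171/320) (31821/20000) (10607/5000)); unfold Eplb, WL, WH; lra. }
              {
                apply (Epleaf 0 (171/320) (87/160) (31821/20000) (10607/5000)); unfold Eplb, WL, WH; lra. } } }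
          {
            destruct (Rle_lt_dec t (31821/20000)).
            {
              destruct (Rle_lt_dec q (177/320)).
              {
                apply (Epleaf 0 (87/160) (177/320) (10607/10000) (31821/20000)); unfold Eplb, WL, WH; lra. }
              {
                apply (Epleaf 0 (177/320) (9/16) (10607/10000) (31821/20000)); unfold Eplb, WL, WH; lra. } }
            {
              destruct (Rle_lt_dec q (177/320)).
              {
                apply (Epleaf 0 (87/160) (177/320) (31821/20000) (10607/5000)); unfold Eplb, WL, WH; lra. }
              {
                destruct (Rle_lt_dec t (74249/40000)).
                {
                  apply (Epleaf 0 (177/320) (9/16) (31821/20000) (74249/40000)); unfold Eplb, WL, WH; lra. }
                {
                  apply (Epleaf 0 (177/320) (9/16) (74249/40000) (10607/5000)); unfold Eplb, WL, WH; lra. } } } } } }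
      {
        destruct (Rle_lt_dec t (10607/10000)).
        {
          destruct (Rle_lt_dec q (93/160)).
          {
            destruct (Rle_lt_dec t (10607/20000)).
            {
              apply (Epleaf 0 (9/16) (93/160) 0 (10607/20000)); unfold Eplb, WL, WH; lra. }
            {
              apply (Epleaf 0 (9/16) (93/160) (10607/20000) (10607/10000)); unfold Eplb, WL, WH; lra. } }
          {
            destruct (Rle_lt_dec t (10607/20000)).
            {
              apply (Epleaf 0 (93/160) (3/5) 0 (10607/20000)); unfold Eplb, WL, WH; lra. }
            {
              destruct (Rle_lt_dec q (189/320)).
              {
                apply (Epleaf 0 (93/160) (189/320) (10607/20000) (10607/10000)); unfold Eplb, WL, WH; lra. }
              {
                apply (Epleaf 0 (189/320) (3/5) (10607/20000) (10607/10000)); unfold Eplb, WL, WH; lra. } } } }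
        {
          destruct (Rle_lt_dec q (93/160)).
          {
            destruct (Rle_lt_dec t (31821/20000)).
            {
              destruct (Rle_lt_dec q (183/320)).
              {
                apply (Epleaf 0 (9/16) (183/320) (10607/10000) (31821/20000)); unfold Eplb, WL, WH; lra. }
              {
                destruct (Rle_lt_dec t (10607/8000)).
                {
                  apply (Epleaf 0 (183/320) (93/160) (10607/10000) (10607/8000)); unfold Eplb, WL, WH; lra. }
                {
                  apply (Epleaf 0 (183/320) (93/160) (10607/8000) (31821/20000)); unfold Eplb, WL, WH; lra. } } }
            {
              destruct (Rle_lt_dec q (183/320)).
              {
                destruct (Rle_lt_dec t (74249/40000)).
                {
                  apply (Epleaf 0 (9/16) (183/320) (31821/20000) (74249/40000)); unfold Eplb, WL, WH; lra. }
                {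
                  destruct (Rle_lt_dec q (363/640)).
                  {
                    apply (Epleaf 0 (9/16) (363/640) (74249/40000) (10607/5000)); unfold Eplb, WL, WH; lra. }
                  {
                    apply (Epleaf 0 (363/640) (183/320) (74249/40000) (10607/5000)); unfold Eplb, WL, WH; lra. } } }
              {
                destruct (Rle_lt_dec t (74249/40000)).
                {
                  apply (Epleaf 0 (183/320) (93/160) (31821/20000) (74249/40000)); unfold Eplb, WL, WH; lra. }
                {
                  destruct (Rle_lt_dec q (369/640)).
                  {
                    apply (Epleaf 0 (183/320) (369/640) (74249/40000) (10607/5000)); unfold Eplb, WL, WH; lra. }
                  {
                    apply (Epleaf 0 (369/640) (93/160) (74249/40000) (10607/5000)); unfold Eplb, WL, WH; lra. } } } } }
          {
            destruct (Rle_lt_dec t (31821/20000)).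
            {
              destruct (Rle_lt_dec q (189/320)).
              {
                destruct (Rle_lt_dec t (10607/8000)).
                {
                  apply (Epleaf 0 (93/160) (189/320) (10607/10000) (10607/8000)); unfold Eplb, WL, WH; lra. }
                {
                  apply (Epleaf 0 (93/160) (189/320) (10607/8000) (31821/20000)); unfold Eplb, WL, WH; lra. } }
              {
                destruct (Rle_lt_dec t (10607/8000)).
                {
                  apply (Epleaf 0 (189/320) (3/5) (10607/10000) (10607/8000)); unfold Eplb, WL, WH; lra. }
                {
                  destruct (Rle_lt_dec q (381/640)).
                  {
                    apply (Epleaf 0 (189/320) (381/640) (10607/8000) (31821/20000)); unfold Eplb, WL, WH; lra. }
                  {
                    apply (Epleaf 0 (381/640) (3/5) (10607/8000) (31821/20000)); unfold Eplb, WL, WH; lra. } } } }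
            {
              destruct (Rle_lt_dec q (189/320)).
              {
                destruct (Rle_lt_dec t (74249/40000)).
                {
                  destruct (Rle_lt_dec q (75/128)).
                  {
                    apply (Epleaf 0 (93/160) (75/128) (31821/20000) (74249/40000)); unfold Eplb, WL, WH; lra. }
                  {
                    apply (Epleaf 0 (75/128) (189/320) (31821/20000) (74249/40000)); unfold Eplb, WL, WH; lra. } }
                {
                  destruct (Rle_lt_dec q (75/128)).
                  {
                    apply (Epleaf 0 (93/160) (75/128) (74249/40000) (10607/5000)); unfold Eplb, WL, WH; lra. }
                  {
                    destruct (Rle_lt_dec t (31821/16000)).
                    {
                      apply (Epleaf 0 (75/128) (189/320) (74249/40000) (31821/16000)); unfold Eplb, WL, WH; lra. }
                    {
                      apply (Epleaf 0 (75/128) (189/320) (31821/16000) (10607/5000)); unfold Eplb, WL, WH; lra. } } } }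
              {
                destruct (Rle_lt_dec t (74249/40000)).
                {
                  destruct (Rle_lt_dec q (381/640)).
                  {
                    apply (Epleaf 0 (189/320) (381/640) (31821/20000) (74249/40000)); unfold Eplb, WL, WH; lra. }
                  {
                    destruct (Rle_lt_dec t (137891/80000)).
                    {
                      apply (Epleaf 0 (381/640) (3/5) (31821/20000) (137891/80000)); unfold Eplb, WL, WH; lra. }
                    {
                      apply (Epleaf 0 (381/640) (3/5) (137891/80000) (74249/40000)); unfold Eplb, WL, WH; lra. } } }
                {
                  destruct (Rle_lt_dec q (381/640)).
                  {
                    destruct (Rle_lt_dec t (31821/16000)).
                    {
                      apply (Epleaf 0 (189/320) (381/640) (74249/40000) (31821/16000)); unfold Eplb, WL, WH; lra. }
                    {
                      apply (Epleaf 0 (189/320) (381/640) (31821/16000) (10607/5000)); unfold Eplb, WL, WH; lra. } }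
                  {
                    destruct (Rle_lt_dec t (31821/16000)).
                    {
                      apply (Epleaf 0 (381/640) (3/5) (74249/40000) (31821/16000)); unfold Eplb, WL, WH; lra. }
                    {
                      apply (Epleaf 0 (381/640) (3/5) (31821/16000) (10607/5000)); unfold Eplb, WL, WH; lra. } } } } } } } } } }
Qed.

Lemma Fpos q W : 3/10 <= q <= 6/10 -> WL <= W <= WH -> (1300/21213) <= Fp q 0 W.
Proof.
  intros Hq HW. unfold WL, WH in *. set (t:=0). assert (Ht: 0<=t<=0) by (unfold t; lra).
  destruct (Rle_lt_dec q (9/20)).
  {
    destruct (Rle_lt_dec q (3/8)).
    {
      apply (Fpleaf (1300/21213) (3/10) (3/8) 0 0); unfold Fplb, WL, WH; lra. }
    {
      destruct (Rle_lt_dec q (33/80)).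
      {
        apply (Fpleaf (1300/21213) (3/8) (33/80) 0 0); unfold Fplb, WL, WH; lra. }
      {
        apply (Fpleaf (1300/21213) (33/80) (9/20) 0 0); unfold Fplb, WL, WH; lra. } } }
  {
    destruct (Rle_lt_dec q (21/40)).
    {
      destruct (Rle_lt_dec q (39/80)).
      {
        destruct (Rle_lt_dec q (15/32)).
        {
          apply (Fpleaf (1300/21213) (9/20) (15/32) 0 0); unfold Fplb, WL, WH; lra. }
        {
          apply (Fpleaf (1300/21213) (15/32) (39/80) 0 0); unfold Fplb, WL, WH; lra. } }
      {
        destruct (Rle_lt_dec q (81/160)).
        {
          destruct (Rle_lt_dec q (159/320)).
          {
            apply (Fpleaf (1300/21213) (39/80) (159/320) 0 0); unfold Fplb, WL, WH; lra. }
          {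
            apply (Fpleaf (1300/21213) (159/320) (81/160) 0 0); unfold Fplb, WL, WH; lra. } }
        {
          destruct (Rle_lt_dec q (33/64)).
          {
            apply (Fpleaf (1300/21213) (81/160) (33/64) 0 0); unfold Fplb, WL, WH; lra. }
          {
            apply (Fpleaf (1300/21213) (33/64) (21/40) 0 0); unfold Fplb, WL, WH; lra. } } } }
    {
      destruct (Rle_lt_dec q (9/16)).
      {
        destruct (Rle_lt_dec q (87/160)).
        {
          destruct (Rle_lt_dec q (171/320)).
          {
            destruct (Rle_lt_dec q (339/640)).
            {
              apply (Fpleaf (1300/21213) (21/40) (339/640) 0 0); unfold Fplb, WL, WH; lra. }
            {
              apply (Fpleaf (1300/21213) (339/640) (171/320) 0 0); unfold Fplb, WL, WH; lra. } }
          {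
            destruct (Rle_lt_dec q (69/128)).
            {
              apply (Fpleaf (1300/21213) (171/320) (69/128) 0 0); unfold Fplb, WL, WH; lra. }
            {
              apply (Fpleaf (1300/21213) (69/128) (87/160) 0 0); unfold Fplb, WL, WH; lra. } } }
        {
          destruct (Rle_lt_dec q (177/320)).
          {
            destruct (Rle_lt_dec q (351/640)).
            {
              apply (Fpleaf (1300/21213) (87/160) (351/640) 0 0); unfold Fplb, WL, WH; lra. }
            {
              apply (Fpleaf (1300/21213) (351/640) (177/320) 0 0); unfold Fplb, WL, WH; lra. } }
          {
            destruct (Rle_lt_dec q (357/640)).
            {
              apply (Fpleaf (1300/21213) (177/320) (357/640) 0 0); unfold Fplb, WL, WH; lra. }
            {
              destruct (Rle_lt_dec q (717/1280)).
              {
                apply (Fpleaf (1300/21213) (357/640) (717/1280) 0 0); unfold Fplb, WL, WH; lra. }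
              {
                apply (Fpleaf (1300/21213) (717/1280) (9/16) 0 0); unfold Fplb, WL, WH; lra. } } } } }
      {
        destruct (Rle_lt_dec q (93/160)).
        {
          destruct (Rle_lt_dec q (183/320)).
          {
            destruct (Rle_lt_dec q (363/640)).
            {
              destruct (Rle_lt_dec q (723/1280)).
              {
                apply (Fpleaf (1300/21213) (9/16) (723/1280) 0 0); unfold Fplb, WL, WH; lra. }
              {
                apply (Fpleaf (1300/21213) (723/1280) (363/640) 0 0); unfold Fplb, WL, WH; lra. } }
            {
              destruct (Rle_lt_dec q (729/1280)).
              {
                apply (Fpleaf (1300/21213) (363/640) (729/1280) 0 0); unfold Fplb, WL, WH; lra. }
              {
                apply (Fpleaf (1300/21213) (729/1280) (183/320) 0 0); unfold Fplb, WL, WH; lra. } } }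
          {
            destruct (Rle_lt_dec q (369/640)).
            {
              destruct (Rle_lt_dec q (147/256)).
              {
                apply (Fpleaf (1300/21213) (183/320) (147/256) 0 0); unfold Fplb, WL, WH; lra. }
              {
                apply (Fpleaf (1300/21213) (147/256) (369/640) 0 0); unfold Fplb, WL, WH; lra. } }
            {
              destruct (Rle_lt_dec q (741/1280)).
              {
                apply (Fpleaf (1300/21213) (369/640) (741/1280) 0 0); unfold Fplb, WL, WH; lra. }
              {
                destruct (Rle_lt_dec q (297/512)).
                {
                  apply (Fpleaf (1300/21213) (741/1280) (297/512) 0 0); unfold Fplb, WL, WH; lra. }
                {
                  apply (Fpleaf (1300/21213) (297/512) (93/160) 0 0); unfold Fplb, WL, WH; lra. } } } } }
        {
          destruct (Rle_lt_dec q (189/320)).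
          {
            destruct (Rle_lt_dec q (75/128)).
            {
              destruct (Rle_lt_dec q (747/1280)).
              {
                destruct (Rle_lt_dec q (1491/2560)).
                {
                  apply (Fpleaf (1300/21213) (93/160) (1491/2560) 0 0); unfold Fplb, WL, WH; lra. }
                {
                  apply (Fpleaf (1300/21213) (1491/2560) (747/1280) 0 0); unfold Fplb, WL, WH; lra. } }
              {
                destruct (Rle_lt_dec q (1497/2560)).
                {
                  apply (Fpleaf (1300/21213) (747/1280) (1497/2560) 0 0); unfold Fplb, WL, WH; lra. }
                {
                  apply (Fpleaf (1300/21213) (1497/2560) (75/128) 0 0); unfold Fplb, WL, WH; lra. } } }
            {
              destruct (Rle_lt_dec q (753/1280)).
              {
                destruct (Rle_lt_dec q (1503/2560)).
                {
                  apply (Fpleaf (1300/21213) (75/128) (1503/2560) 0 0); unfold Fplb, WL, WH; lra. }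
                {
                  apply (Fpleaf (1300/21213) (1503/2560) (753/1280) 0 0); unfold Fplb, WL, WH; lra. } }
              {
                destruct (Rle_lt_dec q (1509/2560)).
                {
                  apply (Fpleaf (1300/21213) (753/1280) (1509/2560) 0 0); unfold Fplb, WL, WH; lra. }
                {
                  apply (Fpleaf (1300/21213) (1509/2560) (189/320) 0 0); unfold Fplb, WL, WH; lra. } } } }
          {
            destruct (Rle_lt_dec q (381/640)).
            {
              destruct (Rle_lt_dec q (759/1280)).
              {
                destruct (Rle_lt_dec q (303/512)).
                {
                  apply (Fpleaf (1300/21213) (189/320) (303/512) 0 0); unfold Fplb, WL, WH; lra. }
                {
                  apply (Fpleaf (1300/21213) (303/512) (759/1280) 0 0); unfold Fplb, WL, WH; lra. } }
              {
                destruct (Rle_lt_dec q (1521/2560)).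
                {
                  apply (Fpleaf (1300/21213) (759/1280) (1521/2560) 0 0); unfold Fplb, WL, WH; lra. }
                {
                  destruct (Rle_lt_dec q (609/1024)).
                  {
                    apply (Fpleaf (1300/21213) (1521/2560) (609/1024) 0 0); unfold Fplb, WL, WH; lra. }
                  {
                    apply (Fpleaf (1300/21213) (609/1024) (381/640) 0 0); unfold Fplb, WL, WH; lra. } } } }
            {
              destruct (Rle_lt_dec q (153/256)).
              {
                destruct (Rle_lt_dec q (1527/2560)).
                {
                  destruct (Rle_lt_dec q (3051/5120)).
                  {
                    apply (Fpleaf (1300/21213) (381/640) (3051/5120) 0 0); unfold Fplb, WL, WH; lra. }
                  {
                    apply (Fpleaf (1300/21213) (3051/5120) (1527/2560) 0 0); unfold Fplb, WL, WH; lra. } }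
                {
                  destruct (Rle_lt_dec q (3057/5120)).
                  {
                    apply (Fpleaf (1300/21213) (1527/2560) (3057/5120) 0 0); unfold Fplb, WL, WH; lra. }
                  {
                    apply (Fpleaf (1300/21213) (3057/5120) (153/256) 0 0); unfold Fplb, WL, WH; lra. } } }
              {
                destruct (Rle_lt_dec q (1533/2560)).
                {
                  destruct (Rle_lt_dec q (3063/5120)).
                  {
                    apply (Fpleaf (1300/21213) (153/256) (3063/5120) 0 0); unfold Fplb, WL, WH; lra. }
                  {
                    apply (Fpleaf (1300/21213) (3063/5120) (1533/2560) 0 0); unfold Fplb, WL, WH; lra. } }
                {
                  destruct (Rle_lt_dec q (3069/5120)).
                  {
                    apply (Fpleaf (1300/21213) (1533/2560) (3069/5120) 0 0); unfold Fplb, WL, WH; lra. }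
                  {
                    apply (Fpleaf (1300/21213) (3069/5120) (3/5) 0 0); unfold Fplb, WL, WH; lra. } } } } } } } } }
Qed.

Lemma PW_ge q t : 3/10 <= q <= 6/10 -> 0 <= t <= w -> 1300/21213 <= PW q t w.
Proof.
  intros Hq Ht. destruct w_facts as [H2 [HL HH]].
  assert (Hid : PW q t w - PW q w w =
    (w - t) * (-((-2*q^3 + 4*w^2*q^10) + (3*q^6 - 10*w^2*q^15)*(t+w)
       + (-4*q^10)*(t^2+t*w+w^2) + (5*q^15)*(t+w)*(t^2+w^2)))).
  { clear. generalize w. intro W. unfold PW. ring. }
  rewrite H2 in Hid.
  assert (HE : 0 <= Ep q t w) by (apply Epos; unfold WL, WH in *; lra).
  assert (Hid2 : PW q t w - PW q w w = (w - t) * Ep q t w).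
  { rewrite Hid. f_equal. unfold Ep. clear. generalize w. intro W. field. }
  assert (HF : 1300/21213 <= Fp q 0 w) by (apply Fpos; lra).
  assert (HF2 : Fp q 0 w = PW q w w).
  { unfold PW, Fp. replace (w^3) with (w*w^2) by ring. replace (w^4) with (w^2*w^2) by ring.
    rewrite H2. clear. generalize w. intro W. field. }
  assert (0 <= (w - t) * Ep q t w) by (apply Rmult_le_pos; lra).
  lra.
Qed.

Lemma Im5_bound q t : 3/10 <= q <= 6/10 -> 0 <= t <= w -> Im (theta5 q t) > 13/100.
Proof.
  intros Hq Ht. rewrite Im5. pose proof (PW_ge q t Hq Ht).
  destruct w_facts as [H2 [HL HH]]. unfold WL in HL.
  assert (0 < PW q t w) by lra.
  assert (21213/10000 * PW q t w < w * PW q t w) by (apply Rmult_lt_compat_r; lra).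
  lra.
Qed.

Lemma normC (x:C) : norm x = Cmod x. Proof. reflexivity. Qed.

Lemma Cmod_xpt t : 0 <= t <= w -> Cmod (xpt t) <= 3.
Proof.
  intros Ht. destruct w_facts as [H2 [HL HH]]. unfold WL in HL.
  unfold Cmod, xpt. simpl.
  rewrite <- (sqrt_pow2 3) by lra. apply sqrt_le_1_alt. nra.
Qed.

Lemma pow_le_exp x m n : 0 <= x <= 1 -> (m <= n)%nat -> x ^ n <= x ^ m.
Proof.
  intros Hx Hmn. replace n with (m + (n - m))%nat by lia. rewrite pow_add.
  assert (0 <= x ^ m) by (apply pow_le; lra).
  assert (x ^ (n - m) <= 1) by (rewrite <- (pow1 (n - m)); apply pow_incr; lra).
  assert (0 <= x ^ (n-m)) by (apply pow_le; lra).
  nra.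
Qed.

Lemma tri_bound k : (21 + 7 * k <= (6 + k) * (6 + k + 1) / 2)%nat.
Proof. apply Nat.div_le_lower_bound; [lia|]. nia. Qed.

Lemma term_bound q t k : 3/10 <= q <= 6/10 -> 0 <= t <= w ->
  norm (theta_term q (xpt t) (6 + k)) <= 16/1000 * (1/10)^k.
Proof.
  intros Hq Ht. rewrite normC. unfold theta_term.
  rewrite Cmod_mult, Cmod_R, Cmod_pow.
  assert (H0 : 0 <= q ^ ((6 + k) * (6 + k + 1) / 2)) by (apply pow_le; lra).
  rewrite Rabs_pos_eq by exact H0.
  assert (H1 : q ^ ((6 + k) * (6 + k + 1) / 2) <= q ^ (21 + 7 * k))
    by (apply pow_le_exp; [lra| apply tri_bound]).
  assert (H2 : q ^ (21 + 7*k) <= (6/10) ^ (21 + 7*k)) by (apply pow_incr; lra).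
  pose proof (Cmod_xpt t Ht) as Hx.
  assert (H3 : Cmod (xpt t) ^ (6 + k) <= 3 ^ (6 + k)) by (apply pow_incr; split; [apply Cmod_ge_0|exact Hx]).
  assert (H4 : (6/10) ^ (21 + 7*k) * 3 ^ (6 + k) = ((6/10)^21 * 3^6) * ((6/10)^7 * 3)^k).
  { rewrite !pow_add, pow_mult, Rpow_mult_distr. ring. }
  assert (H5 : ((6/10)^7 * 3)^k <= (1/10)^k) by (apply pow_incr; lra).
  assert (H6 : 0 <= ((6/10)^7 * 3)^k) by (apply pow_le; lra).
  assert (H7 : 0 <= Cmod (xpt t) ^ (6 + k)) by (apply pow_le, Cmod_ge_0).
  assert (H8 : 0 <= (6/10) ^ (21 + 7*k)) by (apply pow_le; lra).
  apply Rle_trans with ((6/10) ^ (21 + 7*k) * 3 ^ (6 + k)).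
  { apply Rle_trans with (q ^ ((6 + k) * (6 + k + 1) / 2) * 3 ^ (6 + k)).
    - apply Rmult_le_compat_l; lra.
    - apply Rmult_le_compat_r; [apply pow_le; lra| lra]. }
  rewrite H4. apply Rmult_le_compat; lra.
Qed.

Lemma series_norm_le (a : nat -> C) (b : nat -> R) la lb :
  (forall n, norm (a n) <= b n) -> is_series a la -> is_series b lb -> norm la <= lb.
Proof.
  intros Hab Ha Hb.
  assert (H1 : is_lim_seq (fun n => norm (sum_n a n)) (norm la)).
  { change (filterlim (fun n => norm (sum_n a n)) eventually (locally (norm la))).
    eapply filterlim_comp; [exact Ha| apply filterlim_norm]. }
  assert (H2 : is_lim_seq (sum_n b) lb) by exact Hb.
  assert (H := is_lim_seq_le _ _ _ _ (fun n => Rle_trans _ _ _ (norm_sum_n_m a 0 n) (sum_n_m_le _ _ 0 n Hab)) H1 H2).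
  exact H.
Qed.

Lemma Im_plus (a b : C) : Im (plus a b) = Im a + Im b.
Proof. reflexivity. Qed.

Lemma Im_Cplus (a b : C) : Im (Cplus a b) = Im a + Im b.
Proof. reflexivity. Qed.

Lemma Im_le_Cmod (c : C) : Rabs (Im c) <= Cmod c.
Proof. eapply Rle_trans; [apply Rmax_r | apply Rmax_Cmod]. Qed.

Theorem lemma7 :
  forall q t : R, 3/10 <= q <= 6/10 -> 0 <= t <= w ->
    (exists l : C, is_series (theta_star_term q t) l /\ Cmod l <= 18/1000) /\
    Im (theta5 q t) > 13/100 /\
    (exists l : C, is_series (theta_term q (xpt t)) l /\ l <> RtoC 0).
Proof.
  intros q t Hq Ht.
  set (b := fun k : nat => 16/1000 * (1/10)^k).
  assert (Hb : is_series b (16/1000 * /(1 - 1/10))).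
  { apply (is_series_ext (fun n => scal (16/1000) ((1/10)^n))); [intros; reflexivity|].
    assert (Hg : is_series (fun n => (1/10)^n) (/(1 - 1/10))) by (apply is_series_geom; rewrite Rabs_pos_eq; lra).
    exact (is_series_scal_l (K:=R_AbsRing) (V:=R_NormedModule) (16/1000) _ _ Hg). }
  assert (Hab : forall k, norm (theta_term q (xpt t) (6 + k)) <= b k).
  { intros k. apply term_bound; assumption. }
  assert (Hex : ex_series (fun k => theta_term q (xpt t) (6 + k))).
  { apply (ex_series_le _ b Hab). exists (16/1000 * /(1 - 1/10)). exact Hb. }
  destruct Hex as [ls Hls].
  assert (Hn : Cmod ls <= 16/1000 * /(1 - 1/10)).
  { rewrite <- normC. exact (series_norm_le _ b ls _ Hab Hls Hb). }
  assert (Hn' : Cmod ls <= 18/1000).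
  { eapply Rle_trans; [exact Hn|]. lra. }
  assert (Him := Im5_bound q t Hq Ht).
  split; [|split].
  - exists ls. split; [|exact Hn'].
    apply (is_series_decr_n _ 6); [lia|].
    match goal with |- is_series _ ?L => replace L with ls end.
    2:{ simpl Init.Nat.pred. rewrite !sum_Sn, sum_O. unfold theta_star_term. simpl.
      apply injective_projections; simpl; ring. }
    apply (is_series_ext (fun k => theta_term q (xpt t) (6 + k))); [|exact Hls].
    intros n. unfold theta_star_term.
    destruct (Nat.ltb_spec (6 + n) 6); [lia|reflexivity].
  - exact Him.
  - set (S5 := sum_n (theta_term q (xpt t)) (Init.Nat.pred 6)).
    exists (plus ls S5). split.
    + apply (is_series_decr_n _ 6); [lia|].
      match goal with |- is_series _ ?L => replace L with ls end.
      2:{ unfold S5. apply injective_projections; simpl; ring. }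
      exact Hls.
    + intros Heq.
      assert (HS : Im S5 = Im (theta5 q t)).
      { unfold S5. simpl Init.Nat.pred. rewrite !sum_Sn, sum_O, !Im_plus.
        unfold theta5. rewrite !Im_Cplus. ring. }
      assert (H0 : Im (plus ls S5) = 0) by (rewrite Heq; reflexivity).
      rewrite Im_plus, HS in H0.
      pose proof (Im_le_Cmod ls) as Hc.
      apply Rabs_le_between in Hc. lra.
Qed.
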